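(* Let $R$ be a commutative Noetherian ring of prime characteristic $p$, $G$ an $x$-torsion-free left $R[x,f]$-module, $\mathfrak{a}$ an ideal of $R$, $L:=\operatorname{ann}_G(\mathfrak{a}R[x,f])$ (so $G/L$ is $x$-torsion-free), and $N$ an $R$-submodule of $G$ with $L\subseteq N\subseteq G$. (i) If $N=\operatorname{ann}_G(\mathfrak{b}R[x,f])$ for an ideal $\mathfrak{b}\subseteq\mathfrak{a}$, then $N/L=\operatorname{ann}_{G/L}((\mathfrak{b}:\mathfrak{a})R[x,f])$; moreover, if $\operatorname{grann}_{R[x,f]}N=\mathfrak{b}R[x,f]$, then $\operatorname{grann}_{R[x,f]}(N/L)=(\mathfrak{b}:\mathfrak{a})R[x,f]$. (ii) If $N/L=\operatorname{ann}_{G/L}(\mathfrak{c}R[x,f])$ for an ideal $\mathfrak{c}$, then $N=\operatorname{ann}_G(\mathfrak{a}\mathfrak{c}R[x,f])=\operatorname{ann}_G((\mathfrak{a}\cap\mathfrak{c})R[x,f])$; moreover, if $\operatorname{grann}_{R[x,f]}L=\mathfrak{a}R[x,f]$ and $\operatorname{grann}_{R[x,f]}(N/L)=\mathfrak{c}R[x,f]$, then $\operatorname{grann}_{R[x,f]}N=(\mathfrak{a}\cap\mathfrak{c})R[x,f]$. (iii) $N\mapsto N/L$ is an order-preserving bijection from the set of special annihilator submodules of $G$ containing $L$ to the set of special annihilator submodules of $G/L$.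
   Context: $R[x,f]$ is the Frobenius skew polynomial ring: free left $R$-module on $(x^i)_{i\ge0}$, $xr=r^px$; for an ideal $\mathfrak{d}$, $\mathfrak{d}R[x,f]=\bigoplus_n\mathfrak{d}x^n$. $x$-torsion-free: $xg=0\Rightarrow g=0$. $\operatorname{ann}_M\mathfrak{B}$ is the set of elements of $M$ killed by $\mathfrak{B}$; special annihilator submodules of $M$ are those of form $\operatorname{ann}_M\mathfrak{B}$ for a graded two-sided ideal $\mathfrak{B}=\bigoplus_n\mathfrak{b}_nx^n$ ($(\mathfrak{b}_n)$ ascending). $\operatorname{grann}N$ is the set of $\sum r_ix^i$ with each $r_ix^i$ annihilating $N$. *)

(* Defs.v *)
From HB Require Import structures.
From mathcomp Require Import all_boot all_order all_algebra.
Set Implicit Arguments. Unset Strict Implicit. Unset Printing Implicit Defensive.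
Import GRing.Theory.
Local Open Scope ring_scope.

Section Defs.
Variable R : comNzRingType.

Definition psubset {T : Type} (A B : T -> Prop) := forall t, A t -> B t.
Definition pseteq {T : Type} (A B : T -> Prop) := forall t, A t <-> B t.

Definition ideal (I : R -> Prop) :=
  [/\ I 0, (forall a b, I a -> I b -> I (a + b)) & (forall r a, I a -> I (r * a))].

Definition noetherian :=
  forall I : nat -> R -> Prop, (forall n, ideal (I n)) ->
    (forall n, psubset (I n) (I n.+1)) ->
    exists m, forall n, (m <= n)%N -> psubset (I n) (I m).

Definition colonI (b a : R -> Prop) : R -> Prop := fun r => forall s, a s -> b (r * s).
Definition prodI (a c : R -> Prop) : R -> Prop :=
  fun r => exists s : seq (R * R),
    (forall u, u \in s -> a u.1 /\ c u.2) /\ r = \sum_(u <- s) u.1 * u.2.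
Definition capI (a c : R -> Prop) : R -> Prop := fun r => a r /\ c r.

(* A left R[x,f]-module structure on an R-module G (f the Frobenius r |-> r^p)
   is the same as an additive map x : G -> G with x (r g) = r^p x g. *)
Definition frob_module (p : nat) (G : lmodType R) (xG : G -> G) :=
  (forall g h, xG (g + h) = xG g + xG h) /\
  (forall (r : R) g, xG (r *: g) = r ^+ p *: xG g).

Definition x_torsion_free (G : lmodType R) (xG : G -> G) :=
  forall g, xG g = 0 -> g = 0.

(* Elements of R[x,f] are represented by their coefficient sequences
   s = [:: r_0; r_1; ...] (meaning sum_i r_i x^i); action on G: *)
Definition act (G : lmodType R) (xG : G -> G) (s : seq R) (g : G) : G :=
  \sum_(i < size s) s`_i *: iter i xG g.

(* The graded ideal ⊕_n b_n x^n, and dR[x,f] = ⊕_n d x^n *)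
Definition graded_ideal (B : nat -> R -> Prop) : seq R -> Prop :=
  fun s => forall i, B i s`_i.
Definition extI (d : R -> Prop) : seq R -> Prop := graded_ideal (fun _ => d).

Definition ann (G : lmodType R) (xG : G -> G) (S : seq R -> Prop) : G -> Prop :=
  fun g => forall s, S s -> act xG s g = 0.

Definition grann (G : lmodType R) (xG : G -> G) (N : G -> Prop) : seq R -> Prop :=
  fun s => forall i g, N g -> s`_i *: iter i xG g = 0.

Definition submod (G : lmodType R) (N : G -> Prop) :=
  [/\ N 0, (forall g h, N g -> N h -> N (g + h)) & (forall (r : R) g, N g -> N (r *: g))].

Definition special (G : lmodType R) (xG : G -> G) (M : G -> Prop) :=
  exists B : nat -> R -> Prop,
    [/\ (forall n, ideal (B n)), (forall n, psubset (B n) (B n.+1)) &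
        pseteq M (ann xG (graded_ideal B))].

(* pi : G -> Q is (a presentation of) the quotient map G -> G/L of
   R[x,f]-modules: surjective R[x,f]-linear with kernel exactly L. *)
Definition quotient_map (G Q : lmodType R) (xG : G -> G) (xQ : Q -> Q)
    (pi : G -> Q) (L : G -> Prop) :=
  [/\ (forall g h, pi (g + h) = pi g + pi h),
      (forall (r : R) g, pi (r *: g) = r *: pi g),
      (forall g, pi (xG g) = xQ (pi g)),
      (forall q, exists g, pi g = q) &
      (forall g, pi g = 0 <-> L g)].

Definition img (G Q : lmodType R) (pi : G -> Q) (N : G -> Prop) : Q -> Prop :=
  fun q => exists g, N g /\ pi g = q.

End Defs.

(* Main.v *)
Require Import Defs.
From HB Require Import structures.
From mathcomp Require Import all_boot all_order all_algebra.
Set Implicit Arguments. Unset Strict Implicit. Unset Printing Implicit Defensive.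
Import GRing.Theory.
Local Open Scope ring_scope.

Section Aux.
Variable R : comNzRingType.
Variable p : nat.
Hypothesis p_gt1 : (1 < p)%N.

Lemma ideal0 (I : R -> Prop) : ideal I -> I 0. Proof. by case. Qed.
Lemma idealD (I : R -> Prop) x y : ideal I -> I x -> I y -> I (x + y).
Proof. by case=> _ H _; apply: H. Qed.
Lemma idealMl (I : R -> Prop) r x : ideal I -> I x -> I (r * x).
Proof. by case=> _ _ H; apply: H. Qed.
Lemma idealMr (I : R -> Prop) r x : ideal I -> I x -> I (x * r).
Proof. by move=> hI hx; rewrite mulrC; apply: idealMl. Qed.
Lemma idealX (I : R -> Prop) r n : ideal I -> I r -> (0 < n)%N -> I (r ^+ n).
Proof. move=> hI hr; case: n => // n _; rewrite exprSr; exact: idealMl. Qed.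

Lemma pexp_gt0 j : (0 < p ^ j)%N.
Proof. by rewrite expn_gt0 (ltnW p_gt1). Qed.

Lemma ideal_colon (b a : R -> Prop) : ideal b -> ideal (colonI b a).
Proof.
move=> hb; split.
- by move=> s _; rewrite mul0r; apply: ideal0.
- by move=> x y hx hy s hs; rewrite mulrDl; apply: idealD; [|apply: hx|apply: hy].
- by move=> r x hx s hs; rewrite -mulrA; apply: idealMl => //; apply: hx.
Qed.

Lemma ideal_cap (a c : R -> Prop) : ideal a -> ideal c -> ideal (capI a c).
Proof.
move=> ha hc; split.
- by split; apply: ideal0.
- by move=> x y [? ?] [? ?]; split; apply: idealD.
- by move=> r x [? ?]; split; apply: idealMl.
Qed.

Lemma colon_pow (b a : R -> Prop) r t n : ideal b -> colonI b a r -> a t -> (0 < n)%N ->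
  b (t * r ^+ n).
Proof.
move=> hb hr ht; case: n => // n _.
rewrite mulrC exprSr -mulrA; apply: idealMl => //; exact: hr.
Qed.

Definition e (i : nat) (r : R) : seq R := rcons (nseq i 0) r.
Lemma e_nth i r k : (e i r)`_k = if k == i then r else 0.
Proof.
rewrite /e nth_rcons size_nseq nth_nseq; case: ifP => [lt|//].
by rewrite if_same (ltn_eqF lt).
Qed.

Section Mod.
Variable V : lmodType R.
Variable xV : V -> V.
Hypothesis Hf : frob_module p xV.

Lemma x0 : xV 0 = 0.
Proof.
case: Hf => hD _; have h := hD 0 0; rewrite addr0 in h.
by apply: (@addrI _ (xV 0)); rewrite addr0 -h.
Qed.
Lemma iter0 i : iter i xV 0 = 0.
Proof. elim: i => //= i ->; exact: x0. Qed.
Lemma iterDv i g h : iter i xV (g + h) = iter i xV g + iter i xV h.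
Proof. case: Hf => hD _; elim: i => //= i ->; exact: hD. Qed.
Lemma iterZ i r g : iter i xV (r *: g) = r ^+ (p ^ i) *: iter i xV g.
Proof.
case: Hf => _ hZ; elim: i => [|i IH] /=; first by rewrite expn0 expr1.
by rewrite IH hZ -exprM expnSr.
Qed.

Lemma act_e i r g : act xV (e i r) g = r *: iter i xV g.
Proof.
rewrite /act /e size_rcons size_nseq big_ord_recr /= -/(e i r) e_nth eqxx.
rewrite big1 ?add0r // => k _; by rewrite e_nth (ltn_eqF (ltn_ord k)) scale0r.
Qed.

Lemma ann_gradedP (B : nat -> R -> Prop) g : (forall n, B n 0) ->
  ann xV (graded_ideal B) g <-> (forall i r, B i r -> r *: iter i xV g = 0).
Proof.
move=> B0; split.
- move=> h i r hr; rewrite -act_e; apply: h => k; rewrite e_nth.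
  by case: eqP => [->|_].
- by move=> h s hs; rewrite /act big1 // => k _; exact: h.
Qed.

Lemma annP (b : R -> Prop) g : b 0 ->
  ann xV (extI b) g <-> (forall i r, b r -> r *: iter i xV g = 0).
Proof. by move=> b0; apply: ann_gradedP. Qed.

Lemma grann_to (N : V -> Prop) (d : R -> Prop) : d 0 -> pseteq (grann xV N) (extI d) ->
  forall i r, d r <-> (forall g, N g -> r *: iter i xV g = 0).
Proof.
move=> d0 H i r; split.
- move=> hr g hg.
  have : grann xV N (e i r).
    by apply (proj2 (H _)) => k; rewrite e_nth; case: eqP.
  by move=> /(_ i g hg); rewrite e_nth eqxx.
- move=> h.
  have : extI d (e i r).
    apply (proj1 (H _)) => k g hg; rewrite e_nth; case: eqP => [->|_].
      exact: h.
    exact: scale0r.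
  by move/(_ i); rewrite e_nth eqxx.
Qed.

Lemma grann_from (N : V -> Prop) (d : R -> Prop) :
  (forall i r, d r <-> (forall g, N g -> r *: iter i xV g = 0)) ->
  pseteq (grann xV N) (extI d).
Proof.
move=> H s; split => [h i | h i g hg].
- by apply (proj2 (H i _)) => g hg; exact: h.
- exact: (proj1 (H i _) (h i)).
Qed.

Hypothesis Htf : x_torsion_free xV.

Lemma sq_trick u g : (forall k, (u * u) *: iter k xV g = 0) ->
  forall k, u *: iter k xV g = 0.
Proof.
move=> h k; apply: Htf; case: Hf => _ hZ; rewrite hZ.
have -> : u ^+ p = u ^+ (p - 2) * (u * u) by rewrite -expr2 -exprD subnK.
by rewrite -scalerA; have := h k.+1; rewrite /= => ->; rewrite scaler0.
Qed.

Lemma tf_iter n v : iter n xV v = 0 -> v = 0.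
Proof. elim: n => //= n IH /Htf; exact: IH. Qed.

Lemma ann_add (b : R -> Prop) g h : b 0 -> ann xV (extI b) g -> ann xV (extI b) h ->
  ann xV (extI b) (g + h).
Proof.
move=> b0 /(annP _ b0) hg /(annP _ b0) hh; apply/(annP _ b0) => i r hr.
by rewrite iterDv scalerDr hg // hh // addr0.
Qed.

Lemma special_single (M : V -> Prop) : noetherian R -> special xV M ->
  exists b, ideal b /\ pseteq M (ann xV (extI b)).
Proof.
move=> hN [B [hB hBS hM]].
have [m hm] := hN B hB hBS.
have mono : forall n k, (n <= k)%N -> psubset (B n) (B k).
  move=> n k /subnK <-; elim: (k - n)%N => [|d IH] t ht //.
  by rewrite addSn; apply: hBS; apply: IH.
have sub : forall n, psubset (B n) (B m).
  move=> n; case: (leqP n m) => [le|lt]; [exact: mono| exact: hm (ltnW lt)].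
have B0 : forall n, B n 0 by move=> n; apply: ideal0.
exists (B m); split => // g; split => h.
- have h1 := proj1 (ann_gradedP g B0) (proj1 (hM g) h).
  apply/(annP _ (B0 m)) => k r hr.
  case: (leqP m k) => [le|lt]; first by apply: h1; apply: mono le _ hr.
  apply: (tf_iter (n := (m - k)%N)); rewrite iterZ -iterD subnK ?(ltnW lt) //.
  apply: h1; apply: idealX => //; exact: pexp_gt0.
- apply (proj2 (hM g)); apply (proj2 (ann_gradedP g B0)) => n r hr.
  by apply: (proj1 (annP g (B0 m)) h); exact: (sub n r hr).
Qed.

End Mod.
End Aux.

Section Quot.
Variable R : comNzRingType.
Variable p : nat.
Hypothesis p_gt1 : (1 < p)%N.
Variables (G Q : lmodType R) (xG : G -> G) (xQ : Q -> Q) (pi : G -> Q) (a : R -> Prop).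
Hypothesis HfG : frob_module p xG.
Hypothesis HfQ : frob_module p xQ.
Hypothesis HtfG : x_torsion_free xG.
Hypothesis ha : ideal a.
Hypothesis Hpi : quotient_map xG xQ pi (ann xG (extI a)).

Local Notation L := (ann xG (extI a)).

Lemma piD g h : pi (g + h) = pi g + pi h. Proof. by case: Hpi. Qed.
Lemma piZ r g : pi (r *: g) = r *: pi g. Proof. by case: Hpi. Qed.
Lemma piX g : pi (xG g) = xQ (pi g). Proof. by case: Hpi. Qed.
Lemma piS q : exists g, pi g = q. Proof. by case: Hpi. Qed.
Lemma piL g : pi g = 0 <-> L g. Proof. by case: Hpi. Qed.
Lemma piN g : pi (- g) = - pi g. Proof. by rewrite -scaleN1r piZ scaleN1r. Qed.
Lemma piB g h : pi (g - h) = pi g - pi h. Proof. by rewrite piD piN. Qed.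
Lemma pi_iter i g : pi (iter i xG g) = iter i xQ (pi g).
Proof. by elim: i => //= i <-; rewrite piX. Qed.

Lemma a0 : a 0. Proof. exact: ideal0. Qed.

Lemma Lchar h : L h <-> forall j t, a t -> t *: iter j xG h = 0.
Proof. exact: annP _ _ a0. Qed.

Lemma key r i g : L (r *: iter i xG g) <->
  forall j t, a t -> (t * r ^+ (p ^ j)) *: iter (j + i) xG g = 0.
Proof.
split.
- move=> /Lchar h j t ht; have := h j t ht.
  by rewrite (iterZ HfG) iterD scalerA.
- move=> h; apply/Lchar => j t ht; rewrite (iterZ HfG) -iterD scalerA; exact: h.
Qed.

Lemma annQ_pi (c : R -> Prop) g : c 0 ->
  ann xQ (extI c) (pi g) <-> forall i r, c r -> L (r *: iter i xG g).
Proof.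
move=> c0; split.
- move=> /(annP _ _ c0) h i r hr; apply/piL; rewrite piZ pi_iter; exact: h.
- move=> h; apply/(annP _ _ c0) => i r hr; rewrite -pi_iter -piZ; apply/piL; exact: h.
Qed.

Lemma tfQ : x_torsion_free xQ.
Proof.
move=> q hq; have [g hg] := piS q; rewrite -hg; apply/piL.
have /Lchar h : L (xG g) by apply/piL; rewrite piX hg.
apply/Lchar => j t ht; apply: HtfG; case: HfG => _ hZ; rewrite hZ.
rewrite -iterS iterSr; apply: h; apply: idealX => //; exact: ltnW.
Qed.

Lemma memN (N : G -> Prop) : submod N -> psubset L N -> forall g, N g <-> img pi N (pi g).
Proof.
move=> [_ hD _] hLN g; split; first by move=> hg; exists g.
move=> [g' [hg' e]].
have hL : L (g - g') by apply/piL; rewrite piB e subrr.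
by rewrite -(subrK g' g); apply: hD => //; apply: hLN.
Qed.

Lemma img_ann (b : R -> Prop) (M : G -> Prop) : ideal b -> psubset L M ->
  pseteq M (ann xG (extI b)) -> pseteq (img pi M) (ann xQ (extI (colonI b a))).
Proof.
move=> hb hLM hM q; have b0 := ideal0 hb.
have c0 : colonI b a 0 by apply: ideal0; apply: ideal_colon.
split.
- move=> [g [hg <-]]; apply/(annQ_pi _ c0) => i r hr; apply/key => j t ht.
  have /(annP _ _ b0) := proj1 (hM g) hg; apply.
  exact: (colon_pow hb hr ht (pexp_gt0 p_gt1 j)).
- have [g <-] := piS q; move=> /(annQ_pi _ c0) h; exists g; split => //.
  apply (proj2 (hM g)); apply/(annP _ _ b0) => i u hu.
  apply: (sq_trick p_gt1 HfG HtfG) => // k.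
  have hc : colonI b a u by move=> s _; rewrite mulrC; apply: idealMl.
  have /hLM /hM /(annP _ _ b0) := h k u hc.
  by move/(_ 0%N u hu) => /=; rewrite scalerA.
Qed.

Lemma annC (c : R -> Prop) g : ideal c ->
  (ann xQ (extI c) (pi g) <-> ann xG (extI (capI a c)) g) /\
  (ann xQ (extI c) (pi g) <-> ann xG (extI (prodI a c)) g).
Proof.
move=> hc; have c0 := ideal0 hc.
have cap0 : capI a c 0 by split; [exact: ideal0 ha | exact: c0].
have prod0 : prodI a c 0 by exists [::]; split => //; rewrite big_nil.
have Phi : ann xQ (extI c) (pi g) <-> forall i r j t, c r -> a t ->
    (t * r ^+ (p ^ j)) *: iter (j + i) xG g = 0.
  split.
  - by move=> /(annQ_pi _ c0) h i r j t hr ht; apply: (proj1 (key _ _ _) (h i r hr)).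
  - by move=> h; apply/(annQ_pi _ c0) => i r hr; apply/key => j t ht; apply: h.
split; split.
- move=> /Phi h; apply/(annP _ _ cap0) => k u [hua huc].
  apply: (sq_trick p_gt1 HfG HtfG) => // k'.
  by have := h k' u 0%N u huc hua; rewrite expn0 expr1.
- move=> /(annP _ _ cap0) h; apply/Phi => i r j t hr ht; apply: h; split.
  + exact: idealMr.
  + apply: idealMl => //; apply: idealX => //; by rewrite expn_gt0 (ltnW p_gt1).
- move=> /Phi h; apply/(annP _ _ prod0) => k u [s [hs ->]].
  rewrite scaler_suml big1_seq // => v /hs [h1 h2].
  by have := h k v.2 0%N v.1 h2 h1; rewrite expn0 expr1.
- move=> /(annP _ _ prod0) h; apply/Phi => i r j t hr ht; apply: h.
  exists [:: (t, r ^+ (p ^ j))]; split; last by rewrite big_seq1.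
  move=> u; rewrite inE => /eqP -> /=; split => //.
  apply: idealX => //; by rewrite expn_gt0 (ltnW p_gt1).
Qed.

Lemma pi0 : pi 0 = 0. Proof. by have := piZ 0 0; rewrite !scale0r. Qed.

Lemma part_i (N : G -> Prop) : psubset L N -> forall b, ideal b -> psubset b a ->
  pseteq N (ann xG (extI b)) ->
  pseteq (img pi N) (ann xQ (extI (colonI b a))) /\
  (pseteq (grann xG N) (extI b) -> pseteq (grann xQ (img pi N)) (extI (colonI b a))).
Proof.
move=> hLN b hb _ hN; split; first exact: img_ann.
move=> hg; have b0 := ideal0 hb.
have H := grann_to b0 hg.
apply: grann_from => i r; split.
- move=> hr q [g [hgN <-]]; rewrite -pi_iter -piZ; apply/piL; apply/key => j t ht.
  exact: (proj1 (H (j + i)%N _) (colon_pow hb hr ht (pexp_gt0 p_gt1 j)) g hgN).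
- move=> h t ht; apply (proj2 (H i _)) => g hgN.
  have := h (pi g) (ex_intro _ g (conj hgN erefl)).
  rewrite -pi_iter -piZ => /piL /key /(_ 0%N t ht).
  by rewrite expn0 expr1 add0n mulrC.
Qed.

Lemma part_ii (N : G -> Prop) : submod N -> psubset L N ->
  forall c : R -> Prop, ideal c ->
     pseteq (img pi N) (ann xQ (extI c)) ->
     pseteq N (ann xG (extI (prodI a c))) /\
     pseteq N (ann xG (extI (capI a c))) /\
     (pseteq (grann xG L) (extI a) ->
      pseteq (grann xQ (img pi N)) (extI c) ->
      pseteq (grann xG N) (extI (capI a c))).
Proof.
move=> hN hLN c hc hI.
have E : forall g, N g <-> ann xQ (extI c) (pi g).
  move=> g; split => h.
  - exact: (proj1 (hI _) (proj1 (memN hN hLN g) h)).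
  - exact: (proj2 (memN hN hLN g) (proj2 (hI _) h)).
split; [|split].
- move=> g; have [_ h2] := annC g hc; split => h.
  + exact: (proj1 h2 (proj1 (E g) h)).
  + exact: (proj2 (E g) (proj2 h2 h)).
- move=> g; have [h1 _] := annC g hc; split => h.
  + exact: (proj1 h1 (proj1 (E g) h)).
  + exact: (proj2 (E g) (proj2 h1 h)).
- move=> HL HN.
  have HA := grann_to (ideal0 ha) HL. have HC := grann_to (ideal0 hc) HN.
  apply: grann_from => i r; split.
  + move=> [hra hrc] g hgN; apply: (sq_trick p_gt1 HfG HtfG) => k.
    have hq : img pi N (pi g) by exists g.
    have := proj1 (HC k r) hrc _ hq.
    rewrite -pi_iter -piZ => /piL /key /(_ 0%N r hra).
    by rewrite expn0 expr1 add0n.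
  + move=> h; split.
    * apply (proj2 (HA i r)) => g hg; apply: h; exact: hLN.
    * apply (proj2 (HC i r)) => q [g [hgN <-]]; rewrite -pi_iter -piZ (h g hgN).
      exact: pi0.
Qed.

Lemma iii_a (M : G -> Prop) : noetherian R -> special xG M -> psubset L M ->
  special xQ (img pi M).
Proof.
move=> hN hM hLM; have [b [hb hMb]] := special_single p_gt1 HfG HtfG hN hM.
exists (fun _ => colonI b a); split => //.
- move=> n; exact: ideal_colon.
- by move=> n t.
- exact: (img_ann hb hLM hMb).
Qed.

Lemma iii_b (M1 M2 : G -> Prop) : noetherian R -> special xG M2 -> psubset L M2 ->
  psubset (img pi M1) (img pi M2) -> psubset M1 M2.
Proof.
move=> hN hM2 hLM2 hI g hg.
have [b [hb hMb]] := special_single p_gt1 HfG HtfG hN hM2.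
have [g' [hg' e]] := hI (pi g) (ex_intro _ g (conj hg erefl)).
have hL : L (g - g') by apply/piL; rewrite piB e subrr.
apply (proj2 (hMb g)); rewrite -(subrK g' g).
apply: (ann_add HfG (ideal0 hb)).
- exact: (proj1 (hMb _) (hLM2 _ hL)).
- exact: (proj1 (hMb _) hg').
Qed.

Lemma iii_c (M' : Q -> Prop) : noetherian R -> special xQ M' ->
  exists M : G -> Prop, [/\ special xG M, psubset L M & pseteq (img pi M) M'].
Proof.
move=> hN hM'.
have [c [hc hMc]] := special_single p_gt1 HfQ tfQ hN hM'.
exists (fun g => M' (pi g)); split.
- exists (fun _ => capI a c); split => //.
  + move=> n; exact: ideal_cap.
  + by move=> n t.
  + move=> g; have [h1 _] := annC g hc; split => h.
    * exact: (proj1 h1 (proj1 (hMc _) h)).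
    * exact: (proj2 (hMc _) (proj2 h1 h)).
- move=> g /piL ->; apply (proj2 (hMc 0)); apply/(annP _ _ (ideal0 hc)) => i r _.
  by rewrite (iter0 HfQ) scaler0.
- move=> q; split => [[g [hg <-]] // | hq].
  by have [g e] := piS q; exists g; rewrite e.
Qed.

End Quot.

Theorem proposition3p3 (p : nat) (R : comNzRingType) (G Q : lmodType R)
  (xG : G -> G) (xQ : Q -> Q) (pi : G -> Q) (a : R -> Prop) (N : G -> Prop) :
  prime p -> p \in [pchar R] -> noetherian R ->
  frob_module p xG -> x_torsion_free xG -> frob_module p xQ ->
  ideal a ->
  quotient_map xG xQ pi (ann xG (extI a)) ->
  submod N -> psubset (ann xG (extI a)) N ->
  (* G/L is x-torsion-free *)
  x_torsion_free xQ /\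
  (* (i) *)
  (forall b : R -> Prop, ideal b -> psubset b a ->
     pseteq N (ann xG (extI b)) ->
     pseteq (img pi N) (ann xQ (extI (colonI b a))) /\
     (pseteq (grann xG N) (extI b) ->
        pseteq (grann xQ (img pi N)) (extI (colonI b a)))) /\
  (* (ii) *)
  (forall c : R -> Prop, ideal c ->
     pseteq (img pi N) (ann xQ (extI c)) ->
     pseteq N (ann xG (extI (prodI a c))) /\
     pseteq N (ann xG (extI (capI a c))) /\
     (pseteq (grann xG (ann xG (extI a))) (extI a) ->
      pseteq (grann xQ (img pi N)) (extI c) ->
      pseteq (grann xG N) (extI (capI a c)))) /\
  (* (iii) N |-> N/L is an order-preserving bijection
     {special M of G with L <= M} -> {special M' of G/L} *)
  ((forall M : G -> Prop, special xG M -> psubset (ann xG (extI a)) M ->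
      special xQ (img pi M)) /\
   (forall M1 M2 : G -> Prop, special xG M1 -> psubset (ann xG (extI a)) M1 ->
      special xG M2 -> psubset (ann xG (extI a)) M2 ->
      pseteq (img pi M1) (img pi M2) -> pseteq M1 M2) /\
   (forall M' : Q -> Prop, special xQ M' ->
      exists M : G -> Prop, [/\ special xG M, psubset (ann xG (extI a)) M &
                               pseteq (img pi M) M']) /\
   (forall M1 M2 : G -> Prop, special xG M1 -> psubset (ann xG (extI a)) M1 ->
      special xG M2 -> psubset (ann xG (extI a)) M2 ->
      psubset M1 M2 -> psubset (img pi M1) (img pi M2))).
Proof.
move=> hp _ hN HfG HtfG HfQ ha Hpi hsub hLN.
have p_gt1 := prime_gt1 hp.
split; first exact: (tfQ p_gt1 HfG HtfG ha Hpi).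
split; first by move=> b hb hba; exact: (part_i p_gt1 HfG HtfG ha Hpi hLN hb hba).
split; first by move=> c hc; exact: (part_ii p_gt1 HfG HtfG ha Hpi hsub hLN hc).
split; first by move=> M hM hLM; exact: (iii_a p_gt1 HfG HtfG ha Hpi hN hM hLM).
split.
  move=> M1 M2 hM1 hL1 hM2 hL2 hI t; split => ht.
  - apply: (iii_b p_gt1 HfG HtfG Hpi hN hM2 hL2 _ ht) => q hq; exact: (proj1 (hI q) hq).
  - apply: (iii_b p_gt1 HfG HtfG Hpi hN hM1 hL1 _ ht) => q hq; exact: (proj2 (hI q) hq).
split; first by move=> M' hM'; exact: (iii_c p_gt1 HfG HfQ HtfG ha Hpi hN hM').
move=> M1 M2 _ _ _ _ hs q [g [hg <-]]; exists g; split => //; exact: hs.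
Qed.
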